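(* Let $\Omega\subset\mathbb R^d$ be a bounded Borel set, $f:\Omega\to[0,\infty)$ with $\int_\Omega f=1$, $p\ge1$, $x_1,\dots,x_k\in\Omega$, and $h_1,\dots,h_k:[0,1]\to[0,\infty)$ strictly increasing. Let $(A_i)_{i=1}^k$ be an equilibrium and let $(B_i)_{i=1}^k$ be a partition of $\Omega$ with $C(x,(B_i)_i)\le C(x,(A_i)_i)$ for $f$-a.e. $x\in\Omega$. Then $A_i=B_i$ up to $f$-negligible sets for every $i$.
   Context: A partition of $\Omega$ is a family of Borel sets pairwise disjoint up to $f$-negligible sets whose union has full $f\,dx$-measure. For a partition $(B_i)_{i=1}^k$, $C(x,(B_i)_i)=\sum_{i=1}^k[|x-x_i|^p+h_i(\int_{B_i}f\,dx)]\mathbf 1_{B_i}(x)$. A partition $(A_i)$ is an equilibrium if, with $c_j=\int_{A_j}f$, for every $i$: $A_i=\{x:|x-x_i|^p+h_i(c_i)<|x-x_j|^p+h_j(c_j)\ \forall j\ne i\}$ up to $f$-negligible sets. *)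

(* Defs.v *)
From HB Require Import structures.
From mathcomp Require Import all_boot all_order all_algebra.
From mathcomp Require Import all_classical all_reals all_analysis.
Set Implicit Arguments. Unset Strict Implicit. Unset Printing Implicit Defensive.
Import Order.TTheory GRing.Theory Num.Theory.
Import numFieldNormedType.Exports.
Local Open Scope classical_set_scope.
Local Open Scope ring_scope.

(* R^d is modelled as [d.-tuple R] with its
   library (product/Borel) sigma-algebra [measure_tuple_display]. *)

Definition edist (R : realType) (d : nat) (x y : d.-tuple R) : R :=
  Num.sqrt (\sum_(i < d) (tnth x i - tnth y i) ^+ 2).

Definition box (R : realType) (d : nat) (a b : d.-tuple R) : set (d.-tuple R) :=
  [set x | forall i : 'I_d, tnth a i <= tnth x i <= tnth b i].

(* lam is (the) Lebesgue measure on the Borel sets of R^d: it gives boxes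
   their volume (this characterizes it uniquely on Borel sets). *)
Definition is_lebesgue (R : realType) (d : nat)
  (lam : {measure set (d.-tuple R) -> \bar R}) : Prop :=
  forall a b : d.-tuple R, (forall i, tnth a i <= tnth b i) ->
    lam (box a b) = (\prod_(i < d) (tnth b i - tnth a i))%:E.

Definition bounded_Rd (R : realType) (d : nat) (Om : set (d.-tuple R)) : Prop :=
  exists M : R, forall x, Om x -> edist x (nseq_tuple d 0) <= M.

Definition fmass (R : realType) (d : nat)
  (lam : {measure set (d.-tuple R) -> \bar R}) (Om : set (d.-tuple R))
  (f : d.-tuple R -> R) (S : set (d.-tuple R)) : \bar R :=
  (\int[lam]_(x in S `&` Om) (f x)%:E)%E.

Definition fnegligible (R : realType) (d : nat)
  (lam : {measure set (d.-tuple R) -> \bar R}) (Om : set (d.-tuple R))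
  (f : d.-tuple R -> R) (S : set (d.-tuple R)) : Prop :=
  exists N, [/\ measurable N, S `<=` N & fmass lam Om f N = 0%E].

Definition fae_eq (R : realType) (d : nat)
  (lam : {measure set (d.-tuple R) -> \bar R}) (Om : set (d.-tuple R))
  (f : d.-tuple R -> R) (S T : set (d.-tuple R)) : Prop :=
  fnegligible lam Om f ((S `\` T) `|` (T `\` S)).

Definition fpartition (R : realType) (d k : nat)
  (lam : {measure set (d.-tuple R) -> \bar R}) (Om : set (d.-tuple R))
  (f : d.-tuple R -> R) (B : 'I_k -> set (d.-tuple R)) : Prop :=
  [/\ forall i, measurable (B i),
      forall i j, i != j -> fnegligible lam Om f (B i `&` B j)
    & fnegligible lam Om f (Om `\` \bigcup_(i in [set: 'I_k]) B i)].

Definition cellmass (R : realType) (d k : nat)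
  (lam : {measure set (d.-tuple R) -> \bar R}) (Om : set (d.-tuple R))
  (f : d.-tuple R -> R) (B : 'I_k -> set (d.-tuple R)) (i : 'I_k) : R :=
  fine (fmass lam Om f (B i)).

Definition cost (R : realType) (d k : nat)
  (lam : {measure set (d.-tuple R) -> \bar R}) (Om : set (d.-tuple R))
  (f : d.-tuple R -> R) (p : R) (xs : 'I_k -> d.-tuple R)
  (h : 'I_k -> R -> R) (B : 'I_k -> set (d.-tuple R)) (x : d.-tuple R) : R :=
  \sum_(i < k) ((edist x (xs i)) `^ p + h i (cellmass lam Om f B i))
                 * \1_(B i) x.

Definition equilibrium (R : realType) (d k : nat)
  (lam : {measure set (d.-tuple R) -> \bar R}) (Om : set (d.-tuple R))
  (f : d.-tuple R -> R) (p : R) (xs : 'I_k -> d.-tuple R)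
  (h : 'I_k -> R -> R) (A : 'I_k -> set (d.-tuple R)) : Prop :=
  fpartition lam Om f A /\
  forall i : 'I_k,
    fae_eq lam Om f (A i)
      [set x | Om x /\ forall j : 'I_k, j != i ->
         (edist x (xs i)) `^ p + h i (cellmass lam Om f A i)
         < (edist x (xs j)) `^ p + h j (cellmass lam Om f A j)].

(* Main.v *)
Require Import Defs.
From HB Require Import structures.
From mathcomp Require Import all_boot all_order all_algebra.
From mathcomp Require Import all_classical all_reals all_analysis.
From mathcomp Require Import measurable_realfun.
From mathcomp Require Import lra.
Import Order.TTheory GRing.Theory Num.Theory.
Local Open Scope classical_set_scope.
Local Open Scope ring_scope.

Lemma NNPP (P : Prop) : ~ ~ P -> P.
Proof. by move=> nnP; have [|/nnP] := pselect P. Qed.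

Lemma bigU_mem (T : Type) (I : eqType) (F : I -> set T) (s : seq I) x :
  (\big[setU/set0]_(i <- s) F i) x <-> exists2 i, i \in s & F i x.
Proof.
elim: s => [|a s IH]; first by rewrite big_nil; split => // -[].
rewrite big_cons; split.
- case=> [Fa|/IH [i si Fi]]; first by exists a => //; rewrite mem_head.
  by exists i => //; rewrite in_cons si orbT.
- case=> i; rewrite in_cons => /orP [/eqP ->|si] Fi; first by left.
  by right; apply/IH; exists i.
Qed.

Section nu.
Variables (R : realType) (d : nat) (lam : {measure set (d.-tuple R) -> \bar R}).
Variables (Om : set (d.-tuple R)) (mOm : measurable Om) (f : d.-tuple R -> R).
Hypotheses (mf : measurable_fun Om f) (f0 : forall x, Om x -> 0 <= f x)
  (f1 : (\int[lam]_(x in Om) (f x)%:E = 1)%E).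
Local Notation nu := (fmass lam Om f).
Local Open Scope ereal_scope.

Lemma meas_ef S : measurable_fun (S `&` Om) (EFin \o f).
Proof. apply/measurable_EFinP; exact: (measurable_funS mOm _ mf). Qed.

Lemma nu_ge0 S : 0 <= nu S.
Proof. by apply: integral_ge0 => x [_ Ox]; rewrite lee_fin f0. Qed.

Lemma nu_mono S T : measurable S -> measurable T -> S `<=` T -> nu S <= nu T.
Proof.
move=> mS mT ST; apply: ge0_subset_integral.
- exact: measurableI.
- exact: measurableI.
- exact: meas_ef.
- by move=> x [_ Ox]; rewrite lee_fin f0.
- by move=> x [Sx Ox]; split => //; apply: ST.
Qed.

Lemma nu_U S T : measurable S -> measurable T -> [disjoint S & T] ->
  nu (S `|` T) = nu S + nu T.
Proof.
move=> mS mT dST; rewrite /fmass setIUl integral_setU //.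
- exact: measurableI.
- exact: measurableI.
- by rewrite -setIUl; exact: meas_ef.
- apply/disj_setPS => x [[Sx _] [Tx _]].
  by move/disj_setPS: dST; apply; split.
Qed.

Lemma nu_sub S T : measurable S -> measurable T -> nu (S `|` T) <= nu S + nu T.
Proof.
move=> mS mT.
have -> : S `|` T = S `|` (T `\` S).
  apply/seteqP; split => x /=.
  - case=> [?|Tx]; first by left.
    by have [?|?] := pselect (S x); [left|right].
  - by case=> [?|[]]; [left|right].
rewrite nu_U //.
- apply: leeD2l; apply: nu_mono => //.
  exact: measurableD.

- exact: measurableD.
- by apply/disj_setPS => x [Sx [_ ?]].
Qed.

Lemma nu_le1 S : measurable S -> nu S <= 1.
Proof.
move=> mS; rewrite -f1; apply: ge0_subset_integral.
- exact: measurableI.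
- exact: mOm.
- exact/measurable_EFinP.
- by move=> x Ox; rewrite lee_fin f0.
- by move=> x [].
Qed.

Lemma nu_set0 : nu set0 = 0.
Proof. by rewrite /fmass set0I integral_set0. Qed.

Lemma nu_bigU (I : eqType) (N : I -> set (d.-tuple R)) s :
  (forall i, measurable (N i)) ->
  nu (\big[setU/set0]_(i <- s) N i) <= \sum_(i <- s) nu (N i).
Proof.
move=> mN; elim: s => [|a s IH]; first by rewrite !big_nil nu_set0.
rewrite !big_cons; apply: le_trans (nu_sub _ _ _ _) _ => //.
- exact: bigsetU_measurable.
- exact: leeD2l.
Qed.

Lemma neg_sub S T : S `<=` T -> fnegligible lam Om f T -> fnegligible lam Om f S.
Proof. by move=> ST [N [mN TN nN]]; exists N; split => //; exact: subset_trans ST TN. Qed.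

Lemma neg_U S T : fnegligible lam Om f S -> fnegligible lam Om f T ->
  fnegligible lam Om f (S `|` T).
Proof.
move=> [N1 [m1 s1 n1]] [N2 [m2 s2 n2]]; exists (N1 `|` N2); split.
- exact: measurableU.
- by move=> x [?|?]; [left; apply: s1|right; apply: s2].
- apply/le_anti/andP; split; last exact: nu_ge0.
  by apply: le_trans (nu_sub _ _ m1 m2) _; rewrite n1 n2 adde0.
Qed.

Lemma neg_C : fnegligible lam Om f (~` Om).
Proof.
exists (~` Om); split => //; first exact: measurableC.
rewrite /fmass; have -> : ~` Om `&` Om = set0 by apply/seteqP; split => x // [].
exact: integral_set0.
Qed.

Lemma neg_big (I : finType) (F : I -> set (d.-tuple R)) :
  (forall i, fnegligible lam Om f (F i)) ->
  fnegligible lam Om f [set x | exists i, F i x].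
Proof.
move=> hF; have /choice [N hN] := hF.
exists (\big[setU/set0]_(i <- enum I) N i); split.
- by apply: bigsetU_measurable => i _; case: (hN i).
- move=> x [i Fx]; apply/bigU_mem; exists i; first by rewrite mem_enum.
  by case: (hN i) => _ + _; apply.
- apply/le_anti/andP; split; last exact: nu_ge0.
  apply: le_trans (@nu_bigU _ N (enum I) _) _; first by move=> i; case: (hN i).
  by rewrite big1 // => i _; case: (hN i).
Qed.

Lemma neg_and (P Q : d.-tuple R -> Prop) :
  fnegligible lam Om f [set x | ~ P x] -> fnegligible lam Om f [set x | ~ Q x] ->
  fnegligible lam Om f [set x | ~ (P x /\ Q x)].
Proof.
move=> hP hQ; apply: (neg_sub _ _ _ (neg_U _ _ hP hQ)) => x /= nPQ.
by have [Px|nPx] := pselect (P x); [right => Qx; apply: nPQ|left].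
Qed.

Lemma nu_fine S : measurable S -> (fine (nu S))%:E = nu S.
Proof.
move=> mS; rewrite fineK // ge0_fin_numE ?nu_ge0 //.
exact: le_lt_trans (nu_le1 _ mS) (ltry _).
Qed.

Lemma nu_disjU (I : eqType) (G : I -> set (d.-tuple R)) s :
  (forall i, measurable (G i)) ->
  (forall i j, i != j -> forall x, G i x -> G j x -> False) -> uniq s ->
  nu (\big[setU/set0]_(i <- s) G i) = \sum_(i <- s) nu (G i).
Proof.
move=> mG dG; elim: s => [|a s IH]; first by rewrite !big_nil nu_set0.
rewrite cons_uniq => /andP [nas us]; rewrite !big_cons nu_U ?IH //.
- exact: bigsetU_measurable.
- apply/disj_setPS => x [Ga /bigU_mem [j js Gj]].
  apply: (dG a j) Ga Gj; apply: contraNneq nas => ->; exact: js.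
Qed.

End nu.

Lemma cost_at (R : realType) (d k : nat) lam (Om : set (d.-tuple R)) f (p : R) xs h
  (X : 'I_k -> set (d.-tuple R)) x i :
  X i x -> (forall l, l != i -> ~ X l x) ->
  cost lam Om f p xs h X x = Defs.edist x (xs i) `^ p + h i (cellmass lam Om f X i).
Proof.
move=> Xi nX; rewrite /cost (bigD1 i) //= big1 ?addr0.
  by rewrite indicE mem_set // mulr1.
by move=> l li; rewrite indicE memNset ?mulr0 //; apply: nX.
Qed.

Theorem proposition4p9 (R : realType) (d k : nat)
  (lam : {measure set (d.-tuple R) -> \bar R}) (Hlam : is_lebesgue lam)
  (Om : set (d.-tuple R)) (mOm : measurable Om) (bOm : bounded_Rd Om)
  (f : d.-tuple R -> R) (mf : measurable_fun Om f)
  (f0 : forall x, Om x -> 0 <= f x)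
  (f1 : (\int[lam]_(x in Om) (f x)%:E = 1)%E)
  (p : R) (p1 : 1 <= p)
  (xs : 'I_k -> d.-tuple R) (xsOm : forall i, Om (xs i))
  (h : 'I_k -> R -> R)
  (h0 : forall i t, 0 <= t <= 1 -> 0 <= h i t)
  (hinc : forall i s t, 0 <= s -> t <= 1 -> s < t -> h i s < h i t)
  (A B : 'I_k -> set (d.-tuple R))
  (hA : equilibrium lam Om f p xs h A)
  (hB : fpartition lam Om f B)
  (hC : fnegligible lam Om f
          [set x | Om x /\ ~ (cost lam Om f p xs h B x <= cost lam Om f p xs h A x)]) :
  forall i : 'I_k, fae_eq lam Om f (A i) (B i).
Proof.
have nsub := @neg_sub R d lam Om f.
have negand := @neg_and R d lam Om mOm f mf f0.
have nbig := @neg_big R d lam Om mOm f mf f0.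
have nC := @neg_C R d lam Om mOm f.
have nuge0 := @nu_ge0 R d lam Om f f0.
have numono := @nu_mono R d lam Om mOm f mf f0.
have nusub := @nu_sub R d lam Om mOm f mf f0.
have nule1 := @nu_le1 R d lam Om mOm f mf f0 f1.
have nufine := @nu_fine R d lam Om mOm f mf f0 f1.
have nudisj := @nu_disjU R d lam Om mOm f mf.
have nubig := @nu_bigU R d lam Om mOm f mf f0.
have [[mA hAo hAc] hAeq] := hA.
case: hB => mB hBo hBc.
set c := cellmass lam Om f A.
set c' := cellmass lam Om f B.
pose S i x := Om x /\ forall j : 'I_k, j != i ->
  Defs.edist x (xs i) `^ p + h i (c i) < Defs.edist x (xs j) `^ p + h j (c j).
pose P1 x := Om x.
pose P2 x := Om x -> cost lam Om f p xs h B x <= cost lam Om f p xs h A x.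
pose P3 x := Om x -> exists i, A i x.
pose P4 x := Om x -> exists j, B j x.
pose P5 x := forall l m, l != m -> ~ (A l x /\ A m x).
pose P6 x := forall l m, l != m -> ~ (B l x /\ B m x).
pose P7 x := forall i, A i x -> S i x.
pose good x := P1 x /\ P2 x /\ P3 x /\ P4 x /\ P5 x /\ P6 x /\ P7 x.
have nP1 : fnegligible lam Om f [set x | ~ P1 x] := nC.
have nP2 : fnegligible lam Om f [set x | ~ P2 x].
  apply: (nsub _ _ _ hC) => x /= H; split.
    by apply: NNPP => nO; apply: H => /nO.
  by move=> Cx; apply: H.
have nP3 : fnegligible lam Om f [set x | ~ P3 x].
  apply: (nsub _ _ _ hAc) => x /= H; split.
    by apply: NNPP => nO; apply: H => /nO.
  by move=> [i _ Ai]; apply: H => _; exists i.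
have nP4 : fnegligible lam Om f [set x | ~ P4 x].
  apply: (nsub _ _ _ hBc) => x /= H; split.
    by apply: NNPP => nO; apply: H => /nO.
  by move=> [i _ Ai]; apply: H => _; exists i.
have nP5 : fnegligible lam Om f [set x | ~ P5 x].
  apply: (nsub _ [set x | exists lm : 'I_k * 'I_k, lm.1 != lm.2 /\ A lm.1 x /\ A lm.2 x]).
    move=> x /= H; apply: NNPP => nE; apply: H => l m lm [Al Am]; apply: nE.
    by exists (l, m).
  apply: nbig => -[l m] /=; have [lm|] := boolP (l != m).
    by apply: (nsub _ _ _ (hAo l m lm)) => x [_ [Al Am]].
  move=> /negPn/eqP ->; apply: (nsub _ _ _ nC) => x /= [mm].
  by [].  
have nP6 : fnegligible lam Om f [set x | ~ P6 x].
  apply: (nsub _ [set x | exists lm : 'I_k * 'I_k, lm.1 != lm.2 /\ B lm.1 x /\ B lm.2 x]).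
    move=> x /= H; apply: NNPP => nE; apply: H => l m lm [Al Am]; apply: nE.
    by exists (l, m).
  apply: nbig => -[l m] /=; have [lm|] := boolP (l != m).
    by apply: (nsub _ _ _ (hBo l m lm)) => x [_ [Al Am]].
  move=> /negPn/eqP ->; apply: (nsub _ _ _ nC) => x /= [mm].
  by [].
have nP7 : fnegligible lam Om f [set x | ~ P7 x].
  apply: (nsub _ [set x | exists i, A i x /\ ~ S i x]).
    move=> x /= H; apply: NNPP => nE; apply: H => i Ai; apply: NNPP => nS.
    by apply: nE; exists i.
  apply: nbig => i; apply: (nsub _ _ _ (hAeq i)) => x [Ai nS].
  by left.
have nGood : fnegligible lam Om f [set x | ~ good x].
  apply: (negand _ _ nP1); apply: (negand _ _ nP2); apply: (negand _ _ nP3).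
  apply: (negand _ _ nP4); exact: (negand _ _ nP5 (negand _ _ nP6 nP7)).
case: nGood => N0 [mN0 sN0 nN0].
have goodN : forall x, ~ N0 x -> good x.
  by move=> x nN; apply: NNPP => ng; apply: nN; exact: sN0.
have cE i : (c i)%:E = fmass lam Om f (A i) := nufine _ (mA i).
have c'E i : (c' i)%:E = fmass lam Om f (B i) := nufine _ (mB i).
have c01 i : 0 <= c i <= 1.
  by rewrite fine_ge0 ?nuge0 //= -lee_fin cE nule1.
have c'01 i : 0 <= c' i <= 1.
  by rewrite fine_ge0 ?nuge0 //= -lee_fin c'E nule1.
have hmonle : forall j a b, 0 <= a <= 1 -> 0 <= b <= 1 -> h j a <= h j b -> a <= b.
  move=> j a b /andP[a0 a1] /andP[b0 b1] hab; rewrite leNgt; apply/negP => ba.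
  have := hinc j b a b0 a1 ba; lra.
have key : forall x i j, ~ N0 x -> A i x -> B j x ->
    h j (c' j) <= h j (c j) /\ (i != j -> h j (c' j) < h j (c j)).
  move=> x i j nN Ai Bj; have [Ox [P2x [_ [_ [P5x [P6x P7x]]]]]] := goodN x nN.
  have cA : cost lam Om f p xs h A x = Defs.edist x (xs i) `^ p + h i (c i).
    apply: (@cost_at _ _ _ lam Om f p xs h A x i Ai) => l li Al.
    exact: (P5x l i li (conj Al Ai)).
  have cB : cost lam Om f p xs h B x = Defs.edist x (xs j) `^ p + h j (c' j).
    apply: (@cost_at _ _ _ lam Om f p xs h B x j Bj) => l li Bl.
    exact: (P6x l j li (conj Bl Bj)).
  have le := P2x Ox; rewrite cA cB in le.
  have [_ Si] := P7x i Ai.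
  split.
    case: (eqVneq i j) => [ij|ij]; first by rewrite ij in le; lra.
    by have := Si j ltac:(by rewrite eq_sym); lra.
  by move=> ij; have := Si j ltac:(by rewrite eq_sym); lra.
have cle : forall j, c' j <= c j.
  move=> j; have [[x [Bx nN]]|nex] := pselect (exists x, B j x /\ ~ N0 x).
    have [Ox [_ [P3x _]]] := goodN x nN; have [i Ai] := P3x Ox.
    have [hle _] := key x i j nN Ai Bx.
    exact: hmonle j _ _ (c'01 j) (c01 j) hle.
  have : (fmass lam Om f (B j) <= fmass lam Om f N0)%E.
    apply: numono => // x Bx; apply: NNPP => nN; apply: nex; by exists x.
  rewrite nN0 -c'E lee_fin => c'le0.
  by apply: le_trans c'le0 _; case/andP: (c01 j).
have sum1 : \sum_(j < k) c j <= 1.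
  rewrite -lee_fin -sumEFin.
  apply: (@le_trans _ _ (\sum_(j < k) fmass lam Om f (A j `\` N0))%E).
    apply: lee_sum => j _; rewrite cE.
    apply: (@le_trans _ _ (fmass lam Om f ((A j `\` N0) `|` N0))).
      apply: numono; [exact: mA|exact: measurableU (measurableD (mA j) mN0) mN0|].
      by move=> x Ax; have [?|?] := pselect (N0 x); [right|left].
    apply: le_trans (nusub _ _ (measurableD (mA j) mN0) mN0) _.
    by rewrite nN0 adde0.
  rewrite -nudisj.
  - apply: nule1; apply: bigsetU_measurable => j _; exact: measurableD.
  - by move=> j; exact: measurableD.
  - move=> i j ij x [Ai nN] [Aj _].
    have [_ [_ [_ [_ [P5x _]]]]] := goodN x nN; exact: (P5x i j ij (conj Ai Aj)).
  - exact: index_enum_uniq.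
have sum2 : 1 <= \sum_(j < k) c' j.
  rewrite -lee_fin -sumEFin.
  apply: (@le_trans _ _ (fmass lam Om f Om)); first by rewrite /fmass setIid f1.
  apply: (@le_trans _ _ (fmass lam Om f (N0 `|` \big[setU/set0]_(j <- index_enum 'I_k) B j))).
    apply: numono => //.
      by apply: measurableU => //; apply: bigsetU_measurable.
    move=> x Ox; have [?|nN] := pselect (N0 x); [by left|right].
    apply/bigU_mem; have [_ [_ [_ [P4x _]]]] := goodN x nN.
    have [j Bj] := P4x Ox; exists j => //; exact: mem_index_enum.
  apply: le_trans (nusub _ _ mN0 (bigsetU_measurable _ (fun j _ => mB j))) _.
  rewrite nN0 add0e; apply: le_trans (nubig _ _ _ (fun j => mB j)) _.
  by apply: lee_sum => j _; rewrite c'E.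
have ceq : forall j, c' j = c j.
  have hsum : \sum_(j < k) (c j - c' j) = 0.
    apply/le_anti/andP; split; first by rewrite sumrB; lra.
    by apply: sumr_ge0 => j _; rewrite subr_ge0 cle.
  move=> j; apply/eqP; rewrite eq_sym -subr_eq0; apply/eqP.
  by apply: (psumr_eq0P _ hsum) => // l _; rewrite subr_ge0 cle.
have idx : forall x i j, ~ N0 x -> A i x -> B j x -> i = j.
  move=> x i j nN Ai Bj; case: (eqVneq i j) => // ij.
  by have [_ /(_ ij)] := key x i j nN Ai Bj; rewrite ceq ltxx.
move=> i; exists N0; split => //.
move=> x H; apply: NNPP => nN; have [Ox [_ [P3x [P4x _]]]] := goodN x nN.
case: H => [[Ai nBi]|[Bi nAi]].
  have [j Bj] := P4x Ox; apply: nBi; by rewrite (idx x i j nN Ai Bj).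
have [l Al] := P3x Ox; apply: nAi; by rewrite -(idx x l i nN Al Bi).
Qed.
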